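(* Let $D$ be a subsemigroup of $(\mathbb N_0,+)$. (a) $h\notin\mathcal I_D$ if and only if $0\in D$. (b) $\{w\mid w\text{ bracket pattern},\ \mathrm{Br}_\bullet(w)\in\mathcal I_D\}=\mathfrak W_{D\cup\{0\}}$.
   Context: $\mathbb N=\{1,2,\dots\}$, $\mathbb N_0=\mathbb N\cup\{0\}$. A (two-colored) partition $p$ consists of two finite totally ordered sets $U$ (upper row, left to right) and $L$ (lower row), a decomposition of $U\sqcup L$ (the points) into non-empty pairwise disjoint blocks, and a coloring of each point by $\circ$ or $\bullet$. A pair partition has only two-point blocks. On the points of $p$ consider the cyclic order obtained by traversing the lower row left to right and then the upper row right to left. $]\alpha,\beta[$: points strictly after $\alpha$ and before $\beta$ in this cyclic order; $]\alpha,\beta]:=]\alpha,\beta[\cup\{\beta\}$ for $\alpha\ne\beta$, $]\alpha,\alpha]:=\emptyset$. Normalized color: the color for lower points, the opposite color for upper points. $\sigma_p(S)$ = #normalized-$\circ$ points of $S$ $-$ #normalized-$\bullet$ points of $S$. Distinct blocks $B,B'$ cross if there are $\alpha,\beta\in B,\gamma,\delta\in B'$ in cyclic order $\alpha,\gamma,\beta,\delta$. $\mathcal P^{\circ\bullet}_{2,\mathrm{nb}}$: pair partitions each block of which has one point of each normalized color. $\mathcal S_0$: those $p\in\mathcal P^{\circ\bullet}_{2,\mathrm{nb}}$ with $\sigma_p(]\alpha,\beta[)=0$ for all blocks $\{\alpha,\beta\}$. For $p\in\mathcal S_0$: $\delta_p(\alpha,\beta)=\sigma_p(]\alpha,\beta[)$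 for different normalized colors, $\sigma_p(]\alpha,\beta])$ for equal ones; $d_p(B,B')=|\delta_p(\alpha,\alpha')|$ for any $\alpha\in B,\alpha'\in B'$ (well defined). A subsemigroup of $(\mathbb N_0,+)$ is a possibly empty subset closed under addition. $\mathcal I_D$: all $p\in\mathcal S_0$ with $d_p(B,B')\notin D$ for all crossing blocks $B,B'$. $h$ is the partition with upper row $\circ\bullet\circ$ and lower row $\circ\bullet\circ$ whose blocks are $\{$1st lower, 3rd upper$\}$, $\{$2nd lower, 2nd upper$\}$, $\{$3rd lower, 1st upper$\}$. A bracket pattern is a non-empty finite subset $w\subseteq\mathbb N$; $\|w\|:=\max(w)$. Its completion is $A(w):=\{j-i\mid j\in w,\ i\in\mathbb N_0,\ i\notin w,\ i<j\}$. For a submonoid $M$ of $(\mathbb N_0,+)$, $\mathfrak W_M:=\{w\mid w\text{ bracket pattern},\ A(w)\subseteq\mathbb N_0\setminus M\}$. For a bracket pattern $w$ with $m=\|w\|$, $\mathrm{Br}_\bullet(w)$ is the partition whose lower row, left to right, is $b_m,\dots,b_1,b_0,c_0,c_1,\dots,c_m$ and upper row $b'_m,\dots,b'_0,c'_0,\dots,c'_m$, all $b_k,b'_k$ black and all $c_k,c'_k$ white, with blocks $\{b_k,c_k\},\{b'_k,c'_k\}$ for $k\in w$ and $\{b_k,b'_k\},\{c_k,c'_k\}$ for $0\le k\le m$, $k\notin w$. *)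

(* Defs.v *)
From mathcomp Require Import all_boot all_order all_algebra.
Set Implicit Arguments. Unset Strict Implicit. Unset Printing Implicit Defensive.
Import GRing.Theory Num.Theory.

(* A point: (false, i) = i-th lower point (0-indexed, left to right),
            (true, j)  = j-th upper point (0-indexed, left to right). *)
Definition pt := (bool * nat)%type.
Definition Lo (i : nat) : pt := (false, i).
Definition Up (j : nat) : pt := (true, j).

(* A two-colored partition: nU upper points, nL lower points, a coloring
   (true = white/circ, false = black/bullet), and the block relation
   (two points are related iff they lie in the same block). *)
Record partition := Partition {
  nU : nat;
  nL : nat;
  col : pt -> bool;
  blk : rel pt
}.

(* All points in the cyclic order: lower row left to right,
   then upper row right to left. *)
Definition pts (p : partition) : seq pt :=
  [seq Lo i | i <- iota 0 (nL p)] ++ [seq Up j | j <- rev (iota 0 (nU p))].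

(* blk is an equivalence relation on the points of p (blocks = classes,
   automatically non-empty and pairwise disjoint). *)
Definition is_partition (p : partition) : Prop :=
  [/\ (forall x y, blk p x y -> (x \in pts p) && (y \in pts p)),
      (forall x, x \in pts p -> blk p x x),
      (forall x y, blk p x y -> blk p y x) &
      (forall x y z, blk p x y -> blk p y z -> blk p x z)].

Definition ncol (p : partition) (x : pt) : bool :=
  if x.1 then ~~ col p x else col p x.

(* ]a,b[ : points strictly after a and strictly before b in cyclic order
   (for a = b: all points other than a). *)
Definition oo (p : partition) (a b : pt) : seq pt :=
  let s := pts p in
  let n := size s in
  let i := index a s in
  let j := index b s in
  let d := ((j + n - i - 1) %% n).+1 in
  [seq nth a s ((i + k) %% n) | k <- iota 1 d.-1].

Definition oc (p : partition) (a b : pt) : seq pt :=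
  if a == b then [::] else rcons (oo p a b) b.

Definition sigma (p : partition) (S : seq pt) : int :=
  \sum_(x <- S) (if ncol p x then 1 else -1).

Definition pair_nb (p : partition) : Prop :=
  is_partition p /\
  forall x, x \in pts p ->
    count (blk p x) (pts p) = 2 /\
    (forall y, blk p x y -> x != y -> ncol p x != ncol p y).

Definition S0 (p : partition) : Prop :=
  pair_nb p /\ forall a b, blk p a b -> a != b -> sigma p (oo p a b) = 0.

Definition delta (p : partition) (a b : pt) : int :=
  if ncol p a != ncol p b then sigma p (oo p a b) else sigma p (oc p a b).

Definition blocks_cross (p : partition) (x y : pt) : Prop :=
  ~~ blk p x y /\
  exists a b c e,
    [/\ blk p x a, blk p x b, blk p y c & blk p y e] /\
    [/\ a != b, c \in oo p a b & e \in oo p b a].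

(* I_D : d_p(B,B') = |delta_p(x,y)| for x in B, y in B' *)
Definition in_ID (D : nat -> Prop) (p : partition) : Prop :=
  S0 p /\
  forall x y, x \in pts p -> y \in pts p -> blocks_cross p x y ->
    ~ D `|delta p x y|%N.

Definition h_id (x : pt) : nat := if x.1 then 2 - x.2 else x.2.
Definition h_part : partition :=
  Partition 3 3 (fun x => x.2 != 1%N)
    (fun x y => [&& x.2 < 3, y.2 < 3 & h_id x == h_id y]).

(* Bracket patterns (represented by a sequence listing their elements) *)
Definition bracket_pattern (w : seq nat) : Prop :=
  w != [::] /\ 0%N \notin w.

Definition bnorm (w : seq nat) : nat := \max_(j <- w) j.

(* A(w) is contained in N0 \ M *)
Definition in_frakW (M : nat -> Prop) (w : seq nat) : Prop :=
  bracket_pattern w /\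
  forall j i, j \in w -> (i < j)%N -> i \notin w -> ~ M (j - i)%N.

(* Br_bullet(w): in each row, position m-k holds b_k (black) and
   position m+1+k holds c_k (white), m = ||w||. *)
Definition br_id (w : seq nat) (x : pt) : nat * nat * bool :=
  let m := bnorm w in
  let c := (m < x.2)%N in
  let k := if c then (x.2 - m.+1)%N else (m - x.2)%N in
  if k \in w then (0%N, k, x.1) else (1%N, k, c).

Definition Br_black (w : seq nat) : partition :=
  let m := bnorm w in
  Partition m.*2.+2 m.*2.+2 (fun x => (m < x.2)%N)
    (fun x y => [&& (x.2 < m.*2.+2)%N, (y.2 < m.*2.+2)%N & br_id w x == br_id w y]).

(* Main.v *)
Require Import Defs.
From mathcomp Require Import all_boot all_order all_algebra.
From mathcomp Require Import zify.
From Stdlib Require Import Classical.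
Import GRing.Theory Num.Theory.
Set Implicit Arguments. Unset Strict Implicit. Unset Printing Implicit Defensive.

Definition pos (p : Defs.partition) (z : pt) : nat :=
  if z.1 then (nL p + nU p - 1 - z.2)%N else z.2.

Lemma size_pts p : size (pts p) = (nL p + nU p)%N.
Proof. by rewrite /pts size_cat !size_map size_rev !size_iota. Qed.

Lemma mem_pts p z : (z \in pts p) = (if z.1 then z.2 < nU p else z.2 < nL p).
Proof.
case: z => [[] t] /=; rewrite /pts mem_cat.
- apply/orP/idP.
  + case=> /mapP [i]; first by move=> _ [].
    by rewrite mem_rev mem_iota => Hi [->].
  + by move=> H; right; apply/mapP; exists t => //; rewrite mem_rev mem_iota.
- apply/orP/idP.
  + case=> /mapP [i]; last by move=> _ [].
    by rewrite mem_iota => Hi [->].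
  + by move=> H; left; apply/mapP; exists t => //; rewrite mem_iota.
Qed.

Lemma nth_pts p x0 u : u < nL p + nU p ->
  nth x0 (pts p) u = if u < nL p then Lo u else Up (nL p + nU p - 1 - u).
Proof.
move=> Hu; rewrite /pts nth_cat size_map size_iota; case: ifP => H.
  by rewrite (nth_map 0%N) ?size_iota // nth_iota.
rewrite (nth_map 0%N) ?size_rev ?size_iota; last by lia.
rewrite nth_rev ?size_iota; last by lia.
rewrite nth_iota; last by lia.
congr Up; lia.
Qed.

Lemma uniq_pts p : uniq (pts p).
Proof.
rewrite /pts cat_uniq !map_inj_uniq ?rev_uniq ?iota_uniq //=; last first.
- by move=> a b [].
- by move=> a b [].
rewrite andbT; apply/hasPn => z /mapP [i _ ->]; apply/negP => /mapP [j _ E]; by case: E.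
Qed.

Lemma pos_lt p z : z \in pts p -> pos p z < nL p + nU p.
Proof. rewrite mem_pts /pos; case: z => [[] t] /=; lia. Qed.

Lemma nth_pos p x0 z : z \in pts p -> nth x0 (pts p) (pos p z) = z.
Proof.
move=> Hz; rewrite nth_pts ?pos_lt //; move: Hz; rewrite mem_pts /pos.
case: z => [[] t] /= H.
  case: ifP => H2; first by lia.
  rewrite /Up; congr pair; lia.
by rewrite H.
Qed.

Lemma index_pts p z : z \in pts p -> index z (pts p) = pos p z.
Proof.
move=> Hz; rewrite -{1}(nth_pos (Lo 0) Hz) index_uniq ?uniq_pts //.
by rewrite size_pts pos_lt.
Qed.

Lemma pos_inj p a b : a \in pts p -> b \in pts p -> pos p a = pos p b -> a = b.
Proof. by move=> Ha Hb E; rewrite -(nth_pos (Lo 0) Ha) E nth_pos. Qed.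

Lemma modn_small2 x n : x < n + n -> x %% n = if x < n then x else (x - n)%N.
Proof.
case: ifP => h H; first by rewrite modn_small.
have E : x = ((x - n) + n)%N by lia.
by rewrite {1}E modnDr modn_small //; lia.
Qed.

Definition cyc (i k j : nat) := if i < j then (i < k) && (k < j) else (i < k) || (k < j).

Lemma cycP i k j : cyc i k j <-> ((i < j)%N /\ (i < k)%N /\ (k < j)%N) \/ ((j <= i)%N /\ ((i < k)%N \/ (k < j)%N)).
Proof.
rewrite /cyc; case: (ltnP i j) => H; case: (ltnP i k) => H1; case: (ltnP k j) => H2 /=; split; lia.
Qed.

Lemma mem_oo p a b c : a \in pts p -> b \in pts p -> c \in pts p ->
  (c \in oo p a b) = cyc (pos p a) (pos p c) (pos p b).
Proof.
move=> Ha Hb Hc; rewrite /oo !index_pts // size_pts.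
have la := pos_lt Ha; have lb := pos_lt Hb; have lc := pos_lt Hc.
set n := (nL p + nU p)%N in la lb lc *.
set ia := pos p a in la *; set ib := pos p b in lb *; set ic := pos p c in lc *.
apply/mapP/idP.
- move=> [k]; rewrite mem_iota => Hk Ec.
  have Hc' : ic = ((ia + k) %% n)%N.
    rewrite /ic -index_pts // Ec index_uniq ?uniq_pts // size_pts.
    by apply: ltn_pmod; lia.
  have E1 := @modn_small2 (ib + n - ia - 1) n ltac:(lia).
  rewrite E1 in Hk.
  have E2 := @modn_small2 (ia + k) n ltac:(move: Hk; case: ifP; lia).
  rewrite Hc' E2 /cyc; move: Hk; repeat case: ifP; lia.
- move=> H; exists (if ia < ic then ic - ia else ic + n - ia)%N.
    have E1 := @modn_small2 (ib + n - ia - 1) n ltac:(lia).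
    rewrite mem_iota E1; move: H; rewrite /cyc; repeat case: ifP; lia.
  have -> : ((ia + (if ia < ic then ic - ia else ic + n - ia)) %% n)%N = ic.
    rewrite modn_small2; last (case: ifP; lia).
    repeat case: ifP; lia.
  by rewrite nth_pos.
Qed.

Open Scope ring_scope.

Definition ncolAt (p : Defs.partition) (u : nat) := ncol p (nth (Lo 0) (pts p) u).
Definition g (p : Defs.partition) (u : nat) : int := if ncolAt p u then 1 else -1.
Definition G (p : Defs.partition) (t : nat) : int := \sum_(0 <= u < t) g p u.
Definition H (p : Defs.partition) (t : nat) : int := G p t + (if ncolAt p t then 1 else 0).

Lemma GS p t : G p t.+1 = G p t + g p t.
Proof. by rewrite /G big_nat_recr. Qed.

Lemma G0 p : G p 0 = 0.
Proof. by rewrite /G big_geq. Qed.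

Lemma ncol_pos p z : z \in pts p -> ncol p z = ncolAt p (pos p z).
Proof. by move=> Hz; rewrite /ncolAt nth_pos. Qed.

Lemma sum_wrap p i L : let n := size (pts p) in (i < n)%N -> (L < n)%N ->
  \sum_(k <- iota 1 L) g p ((i + k) %% n) =
  if (i + L < n)%N then G p (i + L + 1) - G p (i + 1)
  else G p n - G p (i + 1) + G p (i + L + 1 - n).
Proof.
move=> n Hi; elim: L => [|L IH] HL.
  by rewrite big_nil addn0 Hi subrr.
have -> : iota 1 L.+1 = iota 1 L ++ [:: (1 + L)%N] by rewrite -[L.+1]addn1 iotaD add1n.
rewrite big_cat /= big_seq1 IH; last by lia.
have E := @modn_small2 (i + (1 + L)) n ltac:(lia).
rewrite E.
case: (ltnP (i + L) n) => H1; case: (ltnP (i + (L+1)) n) => H2;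
  case: (ltnP (i + (1 + L)) n) => H3; try lia.
- have -> : (i + L.+1 + 1 = (i + (1 + L)).+1)%N by lia.
  rewrite GS; have -> : (i + L + 1 = i + (1 + L))%N by lia. lia.
- have -> : (i + (1 + L) - n = 0)%N by lia.
  have -> : (i + L.+1 + 1 - n = 1)%N by lia.
  have -> : (i + L + 1 = n)%N by lia.
  rewrite GS G0. lia.
- have -> : (i + L.+1 + 1 - n = (i + (1 + L) - n).+1)%N by lia.
  rewrite GS; have -> : (i + L + 1 - n = i + (1 + L) - n)%N by lia. lia.
Qed.

Lemma sigma_oo p a b : a \in pts p -> b \in pts p ->
  sigma p (oo p a b) =
  if (pos p a < pos p b)%N then G p (pos p b) - G p (pos p a + 1)
  else G p (size (pts p)) - G p (pos p a + 1) + G p (pos p b).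
Proof.
move=> Ha Hb; rewrite /sigma /oo big_map !index_pts //.
have la := pos_lt Ha; have lb := pos_lt Hb; rewrite -size_pts in la lb.
set n := size (pts p) in la lb *.
set ia := pos p a in la *; set ib := pos p b in lb *.
have E : forall k, (if ncol p (nth a (pts p) ((ia + k) %% n)) then 1 else -1) = g p ((ia+k) %% n).
  move=> k; rewrite /g /ncolAt (set_nth_default (Lo 0)) // ltn_pmod //; lia.
under eq_bigr => k _ do rewrite E.
rewrite /= sum_wrap //; last by rewrite ltn_pmod //; lia.
have E1 := @modn_small2 (ib + n - ia - 1) n ltac:(lia).
rewrite E1.
case: (ltnP ia ib) => H1.
  have -> : (ib + n - ia - 1 < n)%N = false by lia.
  have -> : (ia + (ib + n - ia - 1 - n) < n)%N = true by lia.
  have -> : (ia + (ib + n - ia - 1 - n) + 1 = ib)%N by lia. by [].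
have -> : (ib + n - ia - 1 < n)%N = true by lia.
case: (ltnP (ia + (ib + n - ia - 1)) n) => H2.
  have -> : ib = 0%N by lia.
  have -> : (ia + (0 + n - ia - 1) + 1 = n)%N by lia.
  by rewrite G0 addr0.
have -> : (ia + (ib + n - ia - 1) + 1 - n = ib)%N by lia. by [].
Qed.

Lemma delta_H p a b : a \in pts p -> b \in pts p -> G p (size (pts p)) = 0 ->
  delta p a b = H p (pos p b) - H p (pos p a).
Proof.
move=> Ha Hb G0n; rewrite /delta /oc.
case: (eqVneq a b) => [<-|ne].
  by rewrite eqxx /sigma big_nil subrr.
rewrite /sigma big_rcons -/(sigma p _) sigma_oo // !ncol_pos // /H.
have la := pos_lt Ha; have lb := pos_lt Hb.
rewrite addn1 GS G0n /g.
case: (ncolAt p (pos p a)); case: (ncolAt p (pos p b)); case: ifP => _ /=; lia.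
Qed.



Definition Lbl (w : seq nat) (z : pt) : nat :=
  if (bnorm w < z.2)%N then (z.2 - (bnorm w).+1)%N else (bnorm w - z.2)%N.

Lemma mem_ptsBr w z : (z \in pts (Br_black w)) = (z.2 < (bnorm w).*2.+2)%N.
Proof. by rewrite mem_pts /= if_same. Qed.

Lemma posBr w z : pos (Br_black w) z =
  if z.1 then ((bnorm w).*2.+2 + (bnorm w).*2.+2 - 1 - z.2)%N else z.2.
Proof. by []. Qed.

Lemma size_ptsBr w : size (pts (Br_black w)) = ((bnorm w).*2.+2 + (bnorm w).*2.+2)%N.
Proof. by rewrite size_pts. Qed.

Lemma ncolAtBr w u : (u < 4 * bnorm w + 4)%N ->
  ncolAt (Br_black w) u = (((bnorm w < u) && (u < 2 * bnorm w + 2)) || (3 * bnorm w + 3 <= u))%N.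
Proof.
move=> Hu; rewrite /ncolAt nth_pts /=; last by lia.
set m := bnorm w in Hu *.
case: (ltnP u m.*2.+2) => H1; rewrite /ncol /= -/m.
  case: (ltnP m u) => H2; case: (leqP (3 * m + 3) u) => H3 /=; lia.
case: (ltnP m (m.*2.+2 + m.*2.+2 - 1 - u)) => H2; case: (ltnP m u) => H4;
  case: (leqP (3 * m + 3) u) => H3 /=; lia.
Qed.

Definition Gf (m t : nat) : int :=
  if (t <= m + 1)%N then - (t%:Z)
  else if (t <= 2 * m + 2)%N then t%:Z - (2 * m + 2)%:Z
  else if (t <= 3 * m + 3)%N then (2 * m + 2)%:Z - t%:Z
  else t%:Z - (4 * m + 4)%:Z.

Lemma GBr w t : (t <= 4 * bnorm w + 4)%N -> G (Br_black w) t = Gf (bnorm w) t.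
Proof.
elim: t => [|t IH] Ht; first by rewrite G0 /Gf.
rewrite GS IH; last by lia.
rewrite /g ncolAtBr; last by lia.
rewrite /Gf; set m := bnorm w in Ht *.
case: (ltnP m t) => H1; case: (ltnP t (2 * m + 2)) => H2; case: (leqP (3 * m + 3) t) => H3 /=;
  repeat case: ifP; lia.
Qed.

Lemma HBr w z : z \in pts (Br_black w) ->
  H (Br_black w) (pos (Br_black w) z) = ((Lbl w z)%:Z - (bnorm w)%:Z)%R.
Proof.
case: z => [s t]; rewrite mem_ptsBr posBr /H /Lbl /= => Hz.
set m := bnorm w in Hz *.
case: s => /=.
  rewrite GBr -/m; last by lia.
  rewrite ncolAtBr -/m; last by lia.
  rewrite /Gf; case: (ltnP m t) => H1; repeat case: ifP; lia.
rewrite GBr -/m; last by lia.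
rewrite ncolAtBr -/m; last by lia.
rewrite /Gf; case: (ltnP m t) => H1; repeat case: ifP; lia.
Qed.

Lemma deltaBr w a b : a \in pts (Br_black w) -> b \in pts (Br_black w) ->
  delta (Br_black w) a b = ((Lbl w b)%:Z - (Lbl w a)%:Z)%R.
Proof.
move=> Ha Hb; rewrite delta_H // ?HBr //; first lia.
rewrite size_ptsBr GBr; last by lia.
rewrite /Gf; repeat case: ifP; lia.
Qed.


Lemma br_idL w x : br_id w x =
  if Lbl w x \in w then (0%N, Lbl w x, x.1) else (1%N, Lbl w x, (bnorm w < x.2)%N).
Proof. by []. Qed.

Definition blkP (w : seq nat) (k pa pb : nat) : Prop :=
  let m := bnorm w in
  if k \in w then
    (pa + k = m /\ pb = m + 1 + k \/ pa = m + 1 + k /\ pb + k = m \/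
     pa + k = 3 * m + 2 /\ pb = 3 * m + 3 + k \/ pa = 3 * m + 3 + k /\ pb + k = 3 * m + 2)%N
  else
    (pa + k = m /\ pb = 3 * m + 3 + k \/ pa = 3 * m + 3 + k /\ pb + k = m \/
     pa = m + 1 + k /\ pb + k = 3 * m + 2 \/ pa + k = 3 * m + 2 /\ pb = m + 1 + k)%N.

Ltac solve4 := first [exfalso; lia | left; lia | right; left; lia | right; right; left; lia | right; right; right; lia].

Lemma blk_pos w a b : a \in pts (Br_black w) -> b \in pts (Br_black w) ->
  br_id w a = br_id w b -> a != b ->
  [/\ Lbl w b = Lbl w a, (Lbl w a <= bnorm w)%N &
      blkP w (Lbl w a) (pos (Br_black w) a) (pos (Br_black w) b)].
Proof.
rewrite !br_idL /blkP.
case: (boolP (Lbl w a \in w)) => Ia; case: (boolP (Lbl w b \in w)) => Ib // Ha Hb.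
- case=> E1 E2; rewrite -E1 in Ib *.
  case: a b Ha Hb Ia Ib E1 E2 => [sa ta] [sb tb] /=; rewrite !mem_ptsBr !posBr /Lbl /= => Ha Hb _ _ E1 -> ne.
  have ne' : ta <> tb by move=> E; move: ne; rewrite E eqxx.
  set m := bnorm w in Ha Hb E1 ne' *.
  split => //; first by case: ifP; lia.
  move: E1; clear ne; case: sb; case: (ltnP m ta) => H1; case: (ltnP m tb) => H2 /= E1; solve4.
- case=> E1 E2; rewrite -E1 in Ib *.
  case: a b Ha Hb Ia Ib E1 E2 => [sa ta] [sb tb] /=; rewrite !mem_ptsBr !posBr /Lbl /= => Ha Hb _ _ E1 E2 ne.
  set m := bnorm w in Ha Hb E1 E2 ne *.
  have ne' : sa <> sb \/ ta <> tb.
    case: (eqVneq sa sb) => [E|]; last by left; apply/eqP.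
    by right => E'; move: ne; rewrite E E' eqxx.
  split => //; first by case: ifP; lia.
  move: E1 E2; clear ne; case: sa ne'; case: sb; case: (ltnP m ta) => H1; case: (ltnP m tb) => H2 /= ne' E1 E2; try discriminate; solve4.
Qed.


Lemma count2 (T : eqType) (P : pred T) s x y : uniq s -> x \in s -> y \in s -> x != y ->
  {in s, forall z, P z = (z == x) || (z == y)} -> count P s = 2.
Proof.
move=> Us Xs Ys nxy HP.
rewrite (eq_in_count HP).
have := count_predUI (pred1 x) (pred1 y) s.
rewrite (@eq_count _ (predI (pred1 x) (pred1 y)) pred0); last first.
  by move=> z /=; case: (eqVneq z x) => // ->; rewrite (negbTE nxy).
rewrite count_pred0 addn0 !count_uniq_mem // Xs Ys => E.
by transitivity (count (predU (pred1 x) (pred1 y)) s); [apply: eq_count | rewrite E].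
Qed.

Lemma blk_ncol w a b : a \in pts (Br_black w) -> b \in pts (Br_black w) ->
  br_id w a = br_id w b -> a != b -> ncol (Br_black w) a != ncol (Br_black w) b.
Proof.
rewrite !br_idL.
case: (boolP (Lbl w a \in w)) => Ia; case: (boolP (Lbl w b \in w)) => Ib // Ha Hb.
- case=> E1 E2; rewrite -E1 in Ib *.
  case: a b Ha Hb Ia Ib E1 E2 => [sa ta] [sb tb] /=; rewrite !mem_ptsBr /ncol /Lbl /= => Ha Hb _ _ E1 -> ne.
  have ne' : ta <> tb by move=> E; move: ne; rewrite E eqxx.
  set m := bnorm w in Ha Hb E1 ne' *.
  move: E1; clear ne; case: sb; case: (ltnP m ta) => H1; case: (ltnP m tb) => H2 //= E1; exfalso; lia.
- case=> E1 E2; rewrite -E1 in Ib *.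
  case: a b Ha Hb Ia Ib E1 E2 => [sa ta] [sb tb] /=; rewrite !mem_ptsBr /ncol /Lbl /= => Ha Hb _ _ E1 E2 ne.
  set m := bnorm w in Ha Hb E1 E2 ne *.
  have ne' : sa <> sb \/ ta <> tb.
    case: (eqVneq sa sb) => [E|]; last by left; apply/eqP.
    by right => E'; move: ne; rewrite E E' eqxx.
  move: E1 E2; clear ne; case: sa ne'; case: sb; case: (ltnP m ta) => H1; case: (ltnP m tb) => H2 //= ne' E1 E2;
    try discriminate; exfalso; lia.
Qed.

Definition partner (w : seq nat) (x : pt) : pt :=
  let m := bnorm w in
  if Lbl w x \in w then (x.1, if (m < x.2)%N then (m - Lbl w x)%N else (m + 1 + Lbl w x)%N)
  else (~~ x.1, x.2).

Lemma partner_spec w x z : x \in pts (Br_black w) -> z \in pts (Br_black w) ->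
  (br_id w x == br_id w z) = (z == x) || (z == partner w x).
Proof.
rewrite !br_idL /partner.
case: x z => [sx tx] [sz tz]; rewrite !mem_ptsBr /Lbl /= => Hx Hz.
set m := bnorm w in Hx Hz *.
set kx := (if (m < tx)%N then _ else _).
set kz := (if (m < tz)%N then _ else _).
case: (boolP (kx \in w)) => Ix; case: (boolP (kz \in w)) => Iz /=.
- rewrite !xpair_eqE /= /kx /kz; clear Ix Iz kx kz.
  case: sx; case: sz; case: (ltnP m tx) => H1; case: (ltnP m tz) => H2 /=; lia.
- have -> : ((0%N, kx, sx) == (1%N, kz, (m < tz)%N)) = false by [].
  apply/esym/negbTE/negP => /orP [] /eqP [E1 E2].
    by move: Iz; rewrite /kz E2 -/kx Ix.
  have E : kz = kx by rewrite /kz E2 /kx; case: (ltnP m tx) => H1 /=; case: ifP; lia.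
  by move: Iz; rewrite E Ix.
- have -> : ((1%N, kx, (m < tx)%N) == (0%N, kz, sz)) = false by [].
  apply/esym/negbTE/negP => /orP [] /eqP [E1 E2].
    by move: Iz; rewrite /kz E2 -/kx (negbTE Ix).
  by move: Iz; rewrite /kz E2 -/kx (negbTE Ix).
- rewrite !xpair_eqE /= /kx /kz; clear Ix Iz kx kz.
  case: sx; case: sz; case: (ltnP m tx) => H1; case: (ltnP m tz) => H2 /=; lia.
Qed.


Lemma partner_in w x : x \in pts (Br_black w) -> partner w x \in pts (Br_black w).
Proof.
rewrite !mem_ptsBr /partner; case: x => [s t] /= Hx.
case: ifP => _ //=; rewrite /Lbl /=; case: (ltnP (bnorm w) t) => H /=; lia.
Qed.

Lemma partner_neq w x : x \in pts (Br_black w) -> x != partner w x.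
Proof.
rewrite !mem_ptsBr /partner; case: x => [s t] /= Hx.
case: ifP => _; rewrite xpair_eqE.
  by rewrite eqxx /=; apply/eqP; rewrite /Lbl /=; case: (ltnP (bnorm w) t) => H /=; lia.
by case: s.
Qed.

Lemma blk_Br w x y : blk (Br_black w) x y =
  [&& x \in pts (Br_black w), y \in pts (Br_black w) & br_id w x == br_id w y].
Proof. by rewrite !mem_ptsBr. Qed.

Lemma S0_Br w : S0 (Br_black w).
Proof.
split; first split; first split.
- by move=> x y; rewrite blk_Br => /and3P [-> -> _].
- by move=> x Hx; rewrite blk_Br Hx eqxx.
- by move=> x y; rewrite !blk_Br => /and3P [-> -> /eqP ->]; rewrite eqxx.
- by move=> x y z; rewrite !blk_Br => /and3P [-> _ /eqP ->] /and3P [_ -> /eqP ->]; rewrite eqxx.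
- move=> x Hx; split.
    apply: (@count2 _ _ _ x (partner w x)) => //.
    + exact: uniq_pts.
    + exact: partner_in.
    + exact: partner_neq.
    + by move=> z Hz; rewrite blk_Br Hx Hz partner_spec.
  move=> y; rewrite blk_Br => /and3P [Hx' Hy /eqP E] ne.
  exact: blk_ncol.
- move=> a b; rewrite blk_Br => /and3P [Ha Hb /eqP E] ne.
  have Hn := blk_ncol Ha Hb E ne.
  have := deltaBr Ha Hb; rewrite /delta Hn => ->.
  by case: (blk_pos Ha Hb E ne) => -> _ _; rewrite GRing.subrr.
Qed.

Lemma Lbl_eq w x y : br_id w x = br_id w y -> Lbl w x = Lbl w y.
Proof. by rewrite !br_idL; case: ifP; case: ifP => _ _ [] . Qed.

Lemma bnorm_ge w j : j \in w -> (j <= bnorm w)%N.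
Proof. by move=> Hj; rewrite /bnorm (leq_bigmax_seq (F := id) j). Qed.


Lemma partb_to D w : bracket_pattern w -> in_ID D (Br_black w) ->
  in_frakW (fun n => n = 0%N \/ D n) w.
Proof.
move=> Bw [_ HI]; split => // j i Jw ij Iw [E|Dji]; first lia.
have jm := bnorm_ge Jw.
set m := bnorm w in jm.
have Hin : forall t s, (t < m.*2.+2)%N -> (s, t) \in pts (Br_black w) by move=> t s; rewrite mem_ptsBr.
have Lx : Lbl w (Lo (m - j)) = j by rewrite /Lbl /= -/m; case: ifP; lia.
have Ly : Lbl w (Lo (m - i)) = i by rewrite /Lbl /= -/m; case: ifP; lia.
have Lb : Lbl w (Lo (m + 1 + j)) = j by rewrite /Lbl /= -/m; case: ifP; lia.
have Le : Lbl w (Up (m - i)) = i by rewrite /Lbl /= -/m; case: ifP; lia.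
have Hx : Lo (m - j) \in pts (Br_black w) by apply: Hin; lia.
have Hy : Lo (m - i) \in pts (Br_black w) by apply: Hin; lia.
have Hb : Lo (m + 1 + j) \in pts (Br_black w) by apply: Hin; lia.
have He : Up (m - i) \in pts (Br_black w) by apply: Hin; lia.
have bx : br_id w (Lo (m - j)) = (0%N, j, false) by rewrite br_idL Lx Jw.
have by_ : br_id w (Lo (m - i)) = (1%N, i, false).
  by rewrite br_idL Ly (negbTE Iw) /= -/m; congr pair; apply/negbTE; rewrite -leqNgt leq_subr.
have bb : br_id w (Lo (m + 1 + j)) = (0%N, j, false) by rewrite br_idL Lb Jw.
have be : br_id w (Up (m - i)) = (1%N, i, false).
  by rewrite br_idL Le (negbTE Iw) /= -/m; congr pair; apply/negbTE; rewrite -leqNgt leq_subr.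
apply: (HI (Lo (m - j)) (Lo (m - i))) => //; last first.
  by rewrite deltaBr // Lx Ly; have -> : `|(i%:Z - j%:Z)%R|%N = (j - i)%N by lia.
split; first by rewrite blk_Br Hx Hy bx by_.
exists (Lo (m - j)), (Lo (m + 1 + j)), (Lo (m - i)), (Up (m - i)).
split; first split.
- by rewrite blk_Br Hx eqxx.
- by rewrite blk_Br Hx Hb bx bb eqxx.
- by rewrite blk_Br Hy eqxx.
- by rewrite blk_Br Hy He by_ be eqxx.
split.
- by rewrite xpair_eqE /=; apply/eqP; lia.
- rewrite mem_oo // !posBr /=; apply/cycP; lia.
- rewrite mem_oo // !posBr /= -/m; apply/cycP; lia.
Qed.

Lemma partb_from D w : in_frakW (fun n => n = 0%N \/ D n) w ->
  bracket_pattern w /\ in_ID D (Br_black w).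
Proof.
move=> [Bw HW]; split => //; split; first exact: S0_Br.
move=> x y Hx Hy [nb [a [b [c [e [[Hxa Hxb Hyc Hye] [neab Hc He]]]]]]].
move: Hxa Hxb Hyc Hye; rewrite !blk_Br => /and3P [_ Ha /eqP Exa] /and3P [_ Hb /eqP Exb]
  /and3P [_ Hc' /eqP Eyc] /and3P [_ He' /eqP Eye].
rewrite mem_oo // in Hc; rewrite mem_oo // in He.
move/cycP: Hc => Hc; move/cycP: He => He.
have Eab : br_id w a = br_id w b by rewrite -Exa -Exb.
have Ece : br_id w c = br_id w e by rewrite -Eyc -Eye.
case: (blk_pos Ha Hb Eab neab) => Lab Lam HPab.
rewrite deltaBr // (Lbl_eq Exa) (Lbl_eq Eyc).
have nce : c != e.
  apply/eqP => Ece'; rewrite -Ece' in He; move: HPab; rewrite /blkP; case: ifP => _; lia.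
case: (blk_pos Hc' He' Ece nce) => Lce Lcm HPce.
move: HPab HPce; rewrite /blkP.
set m := bnorm w in Lam Lcm *.
case: (boolP (Lbl w a \in w)) => Ia; case: (boolP (Lbl w c \in w)) => Ic.
- move=> *; exfalso; lia.
- have nac : Lbl w c <> Lbl w a by move=> E; move: Ic; rewrite E Ia.
  move=> P1 P2; have lt : (Lbl w c < Lbl w a)%N by lia.
  have -> : `|((Lbl w c)%:Z - (Lbl w a)%:Z)%R|%N = (Lbl w a - Lbl w c)%N by lia.
  by move=> Dd; apply: (HW (Lbl w a) (Lbl w c)) => //; right.
- have nac : Lbl w c <> Lbl w a by move=> E; move: Ia; rewrite -E Ic.
  move=> P1 P2; have lt : (Lbl w a < Lbl w c)%N by lia.
  have -> : `|((Lbl w c)%:Z - (Lbl w a)%:Z)%R|%N = (Lbl w c - Lbl w a)%N by lia.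
  by move=> Dd; apply: (HW (Lbl w c) (Lbl w a)) => //; right.
- move=> *; exfalso; lia.
Qed.


Lemma h_pts x : (x \in pts h_part) = (x.2 < 3)%N.
Proof. by rewrite mem_pts /= if_same. Qed.

Lemma h_enum (P : pt -> Prop) : P (Lo 0) -> P (Lo 1) -> P (Lo 2) -> P (Up 0) -> P (Up 1) -> P (Up 2) ->
  forall x, x \in pts h_part -> P x.
Proof.
move=> ? ? ? ? ? ? [[] [|[|[|t]]]] //; rewrite h_pts.
Qed.

Lemma h_delta x y : x \in pts h_part -> y \in pts h_part -> delta h_part x y = 0%R.
Proof.
move: x; apply: h_enum; move: y; apply: h_enum;
  by rewrite /delta /sigma unlock; vm_compute.
Qed.

Lemma h_S0 : S0 h_part.
Proof.
split; first split; first split.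
- by move=> x y /and3P [Hx Hy _]; rewrite !h_pts Hx Hy.
- by move=> x Hx; rewrite h_pts in Hx; rewrite /= Hx eqxx.
- by move=> x y /and3P [Hx Hy /eqP E]; rewrite /= Hx Hy E eqxx.
- by move=> x y z /and3P [Hx _ /eqP E] /and3P [_ Hz /eqP E']; rewrite /= Hx Hz E E' eqxx.
- apply: h_enum; (split; [by vm_compute | move=> [[] [|[|[|t]]]] //]).
- move=> a b Hab ne; have /and3P [Ha Hb _] := Hab; rewrite -!h_pts in Ha Hb.
  move: Hab ne; move: a Ha; apply: h_enum; move: b Hb; apply: h_enum;
    rewrite /sigma unlock; vm_compute; intros; first [reflexivity | discriminate].
Qed.

Lemma parta D : ~ in_ID D h_part <-> D 0%N.
Proof.
split.
- move=> NI; apply: NNPP => ND; apply: NI; split; first exact: h_S0.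
  by move=> x y Hx Hy _; rewrite h_delta.
- move=> D0 [_ HI]; apply: (HI (Lo 0) (Lo 1)) => //; last by rewrite h_delta.
  split; first by [].
  exists (Lo 0), (Up 2), (Lo 1), (Up 1).
  by split; split; vm_compute.
Qed.


Close Scope ring_scope.

Theorem lemma8p1 (D : nat -> Prop)
  (HD : forall a b : nat, D a -> D b -> D (a + b)%N) :
  (~ in_ID D h_part <-> D 0%N) /\
  (forall w : seq nat,
     (bracket_pattern w /\ in_ID D (Br_black w)) <->
     in_frakW (fun n => n = 0%N \/ D n) w).
Proof.
split; first exact: parta.
move=> w; split; first by case; exact: partb_to.
exact: partb_from.
Qed.
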